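(* Let $\theta$ and $\rho$ be regular infinite cardinals with $\theta < \rho < \kappa$, and let $K$ be a $\kappa$-complete ideal on $\kappa$ with $NS_\kappa|E^\kappa_\theta \subseteq K$. Then there are $c_\alpha \subseteq E^\kappa_{\geq\rho} \cap \alpha$ with $\sup c_\alpha = \alpha$, for $\alpha \in E^\kappa_\theta \cap acc(E^\kappa_{\geq\rho})$, such that $\{\alpha \in E^\kappa_\theta \cap acc(E^\kappa_{\geq\rho}) : c_\alpha \subseteq C\} \in K^+$ for every closed unbounded subset $C$ of $\kappa$.
   Context: $\kappa$ is a regular uncountable cardinal. An ideal on $\kappa$ is a nonempty $K \subseteq P(\kappa)$ with $\kappa \notin K$, every bounded subset of $\kappa$ in $K$, $K$ closed under subsets and under unions of two members; $K^+ = P(\kappa)\setminus K$; $\kappa$-complete means closed under unions of fewer than $\kappa$ members. For $A \subseteq \kappa$, $acc(A) = \{\alpha \in \kappa\setminus\{0\} : \sup(A\cap\alpha) = \alpha\}$. $E^\kappa_\theta = \{\alpha \in acc(\kappa) : \mathrm{cf}(\alpha) = \theta\}$, $E^\kappa_{\geq\rho} = \{\alpha \in acc(\kappa) : \mathrm{cf}(\alpha) \geq \rho\}$. $NS_\kappa|E^\kappa_\theta = \{B \subseteq \kappa : B \cap E^\kappa_\theta \text{ is nonstationary}\}$. *)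

(* Defs.v *)
(* kappa is represented as a type T equipped with a strict
   well-order lt (so T, ordered by lt, has order type kappa; elements of T
   are the ordinals below kappa). *)

Section WO.
Context {T : Type} (lt : T -> T -> Prop).

Definition strict_well_order : Prop :=
  (forall x y z, lt x y -> lt y z -> lt x z) /\
  (forall x y, lt x y \/ x = y \/ lt y x) /\
  well_founded lt.

Definition le (x y : T) : Prop := lt x y \/ x = y.

Definition seg (a : T) : T -> Prop := fun x => lt x a.

Definition subset (A B : T -> Prop) : Prop := forall x, A x -> B x.

Definition equinumerous (A B : T -> Prop) : Prop :=
  exists f : T -> T,
    (forall x, A x -> B (f x)) /\
    (forall x y, A x -> A y -> f x = f y -> x = y) /\
    (forall y, B y -> exists x, A x /\ f x = y).

Definition cofinal_in (X : T -> Prop) (a : T) : Prop :=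
  subset X (seg a) /\ forall b, lt b a -> exists g, X g /\ le b g.

Definition cof_eq (a g : T) : Prop :=
  (exists X, cofinal_in X a /\ equinumerous X (seg g)) /\
  (forall d, lt d g -> ~ exists X, cofinal_in X a /\ equinumerous X (seg d)).

Definition acc (A : T -> Prop) (a : T) : Prop :=
  (exists b, lt b a) /\
  forall b, lt b a -> exists g, A g /\ lt b g /\ lt g a.

Definition E_cf (th : T) (a : T) : Prop := acc (fun _ => True) a /\ cof_eq a th.

Definition E_cf_ge (rh : T) (a : T) : Prop :=
  acc (fun _ => True) a /\ exists g, cof_eq a g /\ ~ lt g rh.

Definition unbounded (X : T -> Prop) : Prop :=
  forall b, exists g, X g /\ le b g.

Definition bounded (X : T -> Prop) : Prop :=
  exists a, forall x, X x -> lt x a.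

Definition club (C : T -> Prop) : Prop :=
  unbounded C /\ forall a, acc C a -> C a.

Definition regular_uncountable_kappa : Prop :=
  (forall a, ~ exists f : T -> T,
       (forall x y, f x = f y -> x = y) /\ forall x, lt (f x) a) /\
  (forall X, unbounded X -> exists f : T -> T,
       (forall x y, f x = f y -> x = y) /\ forall x, X (f x)) /\
  (~ exists f : T -> nat, forall x y, f x = f y -> x = y).

Definition infinite_regular (th : T) : Prop :=
  (exists f : nat -> T, (forall m n, f m = f n -> m = n) /\ forall n, lt (f n) th) /\
  cof_eq th th.

Definition ideal (K : (T -> Prop) -> Prop) : Prop :=
  (exists B, K B) /\
  ~ K (fun _ => True) /\
  (forall B, bounded B -> K B) /\
  (forall A B, subset A B -> K B -> K A) /\
  (forall A B, K A -> K B -> K (fun x => A x \/ B x)).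

Definition kappa_complete (K : (T -> Prop) -> Prop) : Prop :=
  forall (a : T) (F : T -> T -> Prop),
    (forall b, lt b a -> K (F b)) ->
    K (fun x => exists b, lt b a /\ F b x).

Definition nonstationary (S : T -> Prop) : Prop :=
  exists C, club C /\ forall x, C x -> ~ S x.

Definition NS_restr_sub (th : T) (K : (T -> Prop) -> Prop) : Prop :=
  forall B, nonstationary (fun x => B x /\ E_cf th x) -> K B.

End WO.

(* Main.v *)
Require Import Defs.
From Stdlib Require Import Classical ClassicalEpsilon FunctionalExtensionality PropExtensionality.

Section Ord.
Variable T : Type.
Variable lt : T -> T -> Prop.
Hypothesis Hwo : strict_well_order lt.

Lemma lt_trans x y z : lt x y -> lt y z -> lt x z.
Proof. destruct Hwo as [H _]. apply H. Qed.
Lemma tri x y : lt x y \/ x = y \/ lt y x.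
Proof. destruct Hwo as [_ [H _]]. apply H. Qed.
Lemma wf : well_founded lt.
Proof. destruct Hwo as [_ [_ H]]. exact H. Qed.
Lemma irr x : ~ lt x x.
Proof. induction (wf x) as [x _ IH]. intro H. exact (IH x H H). Qed.
Lemma asym x y : lt x y -> ~ lt y x.
Proof. intros H1 H2. exact (irr x (lt_trans _ _ _ H1 H2)). Qed.
Lemma le_refl x : le lt x x.
Proof. right; reflexivity. Qed.
Lemma le_lt x y z : le lt x y -> lt y z -> lt x z.
Proof. intros [H|H] H2; [eapply lt_trans; eauto | subst; auto]. Qed.
Lemma lt_le x y z : lt x y -> le lt y z -> lt x z.
Proof. intros H [H2|H2]; [eapply lt_trans; eauto | subst; auto]. Qed.
Lemma le_trans x y z : le lt x y -> le lt y z -> le lt x z.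
Proof. intros [H|H] H2; [left; eapply lt_le; eauto | subst; auto]. Qed.
Lemma lt_lew x y : lt x y -> le lt x y.
Proof. intro; left; auto. Qed.
Lemma not_lt_le x y : ~ lt x y -> le lt y x.
Proof. intro H. destruct (tri x y) as [h|[h|h]]; [contradiction| right; auto| left; auto]. Qed.
Lemma le_not_lt x y : le lt x y -> ~ lt y x.
Proof. intros [H|H] H2; [exact (asym _ _ H H2)| subst; exact (irr _ H2)]. Qed.
Lemma not_le_lt x y : ~ le lt x y -> lt y x.
Proof. intro H. destruct (tri x y) as [h|[h|h]]; [destruct H; left; auto| destruct H; right; auto| auto]. Qed.
Lemma le_antisym x y : le lt x y -> le lt y x -> x = y.
Proof. intros [H|H] H2; auto. exfalso; exact (le_not_lt _ _ H2 H). Qed.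

Lemma wf_min (P : T -> Prop) : (exists x, P x) -> exists x, P x /\ forall y, P y -> ~ lt y x.
Proof.
  intros [x Hx]. apply NNPP; intro Hn.
  assert (forall z, ~ P z). { intro z. induction (wf z) as [z _ IH]. intro Pz.
    apply Hn. exists z. split; auto. intros y Py Hy. exact (IH y Hy Py). }
  exact (H x Hx).
Qed.

Lemma max2 a b : exists m, le lt a m /\ le lt b m.
Proof. destruct (tri a b) as [h|[h|h]]; [exists b|exists b|exists a]; subst; split; auto using le_refl, lt_lew. Qed.

Definition least (d : T) (P : T -> Prop) : T :=
  epsilon (inhabits d) (fun x => P x /\ forall y, P y -> ~ lt y x).

Lemma least_spec d P : (exists x, P x) -> P (least d P) /\ forall y, P y -> ~ lt y (least d P).
Proof. intro H. unfold least. apply (epsilon_spec (inhabits d) (fun x => P x /\ forall y, P y -> ~ lt y x)). apply wf_min; auto. Qed.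

Section Enum.
Variable d : T.
Variable Z : T -> Prop.

Definition phiF (z : T) (rec : forall y, lt y z -> T) : T :=
  least d (fun v => forall z' (H : lt z' z), Z z' -> rec z' H <> v).

Definition phi : T -> T := Fix wf (fun _ => T) phiF.

Lemma phi_eq z : phi z = least d (fun v => forall z', lt z' z -> Z z' -> phi z' <> v).
Proof.
  unfold phi at 1. rewrite Fix_eq.
  - unfold phiF. f_equal.
  - intros x f g Hfg. unfold phiF.
    assert (E : f = g). { apply functional_extensionality_dep; intro y. apply functional_extensionality_dep; intro p. auto. }
    subst; reflexivity.
Qed.

Definition Pz z v := forall z', lt z' z -> Z z' -> phi z' <> v.

Lemma phi_spec z : Pz z (phi z) /\ (forall v, Pz z v -> ~ lt v (phi z)) /\ le lt (phi z) z.
Proof.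
  induction (wf z) as [z _ IH].
  assert (Hz : Pz z z). { intros z' Hz' _ E. destruct (IH z' Hz') as [_ [_ Hle]]. rewrite E in Hle. exact (le_not_lt _ _ Hle Hz'). }
  pose proof (least_spec d (Pz z) (ex_intro _ z Hz)) as [A B].
  fold (Pz z) in *. rewrite phi_eq. fold (Pz z).
  split; [auto| split; [auto|]]. apply not_lt_le. apply B. auto.
Qed.

Lemma phi_inj z1 z2 : Z z1 -> Z z2 -> phi z1 = phi z2 -> z1 = z2.
Proof.
  intros H1 H2 E. destruct (tri z1 z2) as [h|[h|h]]; auto.
  - destruct (phi_spec z2) as [P _]. exfalso; exact (P z1 h H1 E).
  - destruct (phi_spec z1) as [P _]. exfalso; exact (P z2 h H2 (eq_sym E)).
Qed.

Lemma phi_down z v : lt v (phi z) -> exists z', lt z' z /\ Z z' /\ phi z' = v.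
Proof.
  intro H. destruct (phi_spec z) as [_ [M _]]. apply NNPP; intro Hn.
  apply (M v); auto. intros z' h1 h2 E. apply Hn. exists z'; auto.
Qed.

Lemma phi_mono z1 z2 : Z z1 -> Z z2 -> lt z1 z2 -> lt (phi z1) (phi z2).
Proof.
  intros H1 H2 h. destruct (tri (phi z1) (phi z2)) as [e|[e|e]]; auto.
  - exfalso. rewrite (phi_inj _ _ H1 H2 e) in h. exact (irr _ h).
  - exfalso. destruct (phi_down _ _ e) as [z' [a [b c]]].
    rewrite (phi_inj _ _ b H2 c) in a. exact (asym _ _ a h).
Qed.

Lemma phi_le z : le lt (phi z) z.
Proof. apply phi_spec. Qed.

Lemma enum_seg g : (forall z, Z z -> lt z g) -> exists e, le lt e g /\ equinumerous Z (seg lt e).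
Proof.
  intro HZ.
  set (Q := fun v => le lt v g /\ ~ exists z, Z z /\ phi z = v).
  assert (Qg : Q g). { split. apply le_refl. intros [z [h1 h2]]. pose proof (phi_le z). rewrite h2 in H.
    exact (le_not_lt _ _ H (HZ z h1)). }
  destruct (wf_min Q (ex_intro _ g Qg)) as [e [[Eg En] Emin]].
  exists e. split; auto. exists phi. split; [|split].
  - intros z Hz. unfold seg. apply not_le_lt. intro Hle.
    destruct Hle as [Hl|Hl].
    + destruct (phi_down _ _ Hl) as [z' [_ [a b]]]. apply En. exists z'; auto.
    + apply En. exists z; auto.
  - intros; eapply phi_inj; eauto.
  - intros y Hy. unfold seg in Hy. apply NNPP; intro Hn. apply (Emin y); auto.
    split. left. eapply lt_le; eauto. intros [z [a b]]. apply Hn. exists z; auto.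
Qed.
End Enum.

Lemma inj_seg (A : T -> Prop) (k : T -> T) g :
  (forall x, A x -> lt (k x) g) -> (forall x y, A x -> A y -> k x = k y -> x = y) ->
  exists e, le lt e g /\ equinumerous A (seg lt e).
Proof.
  intros Hk Hinj.
  set (Z := fun z => exists x, A x /\ k x = z).
  destruct (enum_seg g Z g) as [e [Heg [f [F1 [F2 F3]]]]].
  { intros z [x [a b]]. subst; auto. }
  exists e; split; auto. exists (fun x => f (k x)). split; [|split].
  - intros x Ax. apply F1. exists x; auto.
  - intros x y Ax Ay E. apply Hinj; auto. apply F2; auto; [exists x|exists y]; auto.
  - intros y Hy. destruct (F3 y Hy) as [z [[x [a b]] c]]. exists x. subst; auto.
Qed.


Variable Hkappa : regular_uncountable_kappa lt.

Lemma choose_fun {A B : Type} (P : A -> B -> Prop) : (forall a, exists b, P a b) -> exists f : A -> B, forall a, P a (f a).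
Proof.
  intro H. exists (fun a => proj1_sig (constructive_indefinite_description _ (H a))).
  intro a. exact (proj2_sig (constructive_indefinite_description _ (H a))).
Qed.

Lemma bound_seg i (f : T -> T) : exists b, forall j, lt j i -> lt (f j) b.
Proof.
  apply NNPP; intro Hn.
  assert (HU : unbounded lt (fun w => exists j, lt j i /\ f j = w)).
  { intro b. apply NNPP; intro Hb. apply Hn. exists b. intros j Hj. apply not_le_lt. intro Hle.
    apply Hb. exists (f j). split; eauto. }
  destruct Hkappa as [K1 [K2 _]].
  destruct (K2 _ HU) as [u [Uinj Uin]].
  destruct (choose_fun (fun x j => lt j i /\ f j = u x)) as [p Hp].
  { intro x. destruct (Uin x) as [j Hj]. exists j; auto. }
  apply (K1 i). exists p. split.
  - intros x y E. apply Uinj. destruct (Hp x) as [_ a]. destruct (Hp y) as [_ b]. rewrite <- a, <- b, E. auto.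
  - intro x. apply Hp.
Qed.

Lemma bound_nat (f : nat -> T) : exists b, forall n, lt (f n) b.
Proof.
  apply NNPP; intro Hn.
  assert (HU : unbounded lt (fun w => exists n, f n = w)).
  { intro b. apply NNPP; intro Hb. apply Hn. exists b. intros n. apply not_le_lt. intro Hle.
    apply Hb. exists (f n). split; eauto. }
  destruct Hkappa as [K1 [K2 K3]].
  destruct (K2 _ HU) as [u [Uinj Uin]].
  destruct (choose_fun (fun x n => f n = u x)) as [p Hp].
  { intro x. destruct (Uin x) as [n Hn']. exists n; auto. }
  apply K3. exists p. intros x y E. apply Uinj. rewrite <- (Hp x), <- (Hp y), E. auto.
Qed.

Lemma lub_ex (P : T -> Prop) b : (forall x, P x -> lt x b) ->
  exists s, (forall x, P x -> le lt x s) /\ (forall t, (forall x, P x -> le lt x t) -> le lt s t).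
Proof.
  intro Hb.
  destruct (wf_min (fun s => forall x, P x -> le lt x s) (ex_intro _ b (fun x h => lt_lew _ _ (Hb x h)))) as [s [S1 S2]].
  exists s. split; auto. intros t Ht. apply not_lt_le. intro h. exact (S2 t Ht h).
Qed.

Lemma omega_lemma i (N : T -> T -> T) b : (exists j, lt j i) -> (forall j y, lt j i -> le lt y (N j y)) ->
  exists s, lt b s /\ forall j, lt j i -> forall t, lt t s -> exists y, lt t (N j y) /\ lt (N j y) s.
Proof.
  intros [j0 Hj0] HN.
  destruct (choose_fun (fun y b' => lt y b' /\ forall j, lt j i -> lt (N j y) b')) as [st Hst].
  { intro y. destruct (bound_seg i (fun j => N j y)) as [b0 Hb0]. exists b0. split; auto.
    eapply le_lt. apply (HN j0 y Hj0). apply Hb0; auto. }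
  set (bs := fix bs (n : nat) : T := match n with O => b | S n => st (bs n) end).
  destruct (bound_nat bs) as [B HB].
  destruct (lub_ex (fun x => exists n, bs n = x) B) as [s [S1 S2]].
  { intros x [n E]. subst. auto. }
  assert (Hlt : forall n, lt (bs n) s).
  { intro n. eapply lt_le. apply (Hst (bs n)). apply S1. exists (S n). reflexivity. }
  exists s. split. apply (Hlt 0). intros j Hj t Ht.
  assert (exists n, lt t (bs n)).
  { apply NNPP; intro Hn. assert (le lt s t). apply S2. intros x [n E]. subst. apply not_lt_le. intro h. apply Hn. exists n; auto.
    exact (le_not_lt _ _ H Ht). }
  destruct H as [n Hn]. exists (bs n). split.
  - eapply lt_le; eauto.
  - eapply lt_le. apply (Hst (bs n)). auto. apply lt_lew. apply (Hlt (S n)).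
Qed.

Lemma acc_mono (A B : T -> Prop) a : subset A B -> acc lt A a -> acc lt B a.
Proof. intros H [H1 H2]. split; auto. intros b hb. destruct (H2 b hb) as [g [a1 [a2 a3]]]. exists g; auto. Qed.

Lemma club_inter i (F : T -> T -> Prop) : (forall j, lt j i -> club lt (F j)) ->
  club lt (fun x => forall j, lt j i -> F j x).
Proof.
  intro HF. split.
  - intro b. destruct (classic (exists j, lt j i)) as [Hex|Hno].
    + destruct (choose_fun (fun (p : T * T) z => (lt (fst p) i -> F (fst p) z) /\ le lt (snd p) z)) as [Nf HN].
      { intros [j y]. simpl. destruct (classic (lt j i)) as [h|h].
        - destruct (HF j h) as [U _]. destruct (U y) as [z [a c]]. exists z; auto.
        - exists y. split. intro; contradiction. apply le_refl. }
      destruct (omega_lemma i (fun j y => Nf (j, y)) b Hex) as [s [Hs1 Hs2]].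
      { intros j y _. apply (HN (j, y)). }
      exists s. split; [|left; auto]. intros j Hj. destruct (HF j Hj) as [_ Cl]. apply Cl. split.
      * exists b; auto.
      * intros t Ht. destruct (Hs2 j Hj t Ht) as [y [a c]]. exists (Nf (j, y)). split; auto. apply (HN (j, y)). auto.
    + exists b. split; [|apply le_refl]. intros j Hj. exfalso; apply Hno; eauto.
  - intros a Ha j Hj. destruct (HF j Hj) as [_ Cl]. apply Cl. eapply acc_mono; [|exact Ha]. intros x Hx. auto.
Qed.

Lemma acc_acc (X : T -> Prop) a : acc lt (acc lt X) a -> acc lt X a.
Proof.
  intros [H1 H2]. split; auto. intros b hb. destruct (H2 b hb) as [g [[_ G] [a1 a2]]].
  destruct (G b a1) as [x [x1 [x2 x3]]]. exists x. split; auto. split; auto. eapply lt_trans; eauto.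
Qed.

Lemma acc_club (X : T -> Prop) i : (exists j, lt j i) -> unbounded lt X -> club lt (acc lt X).
Proof.
  intros Hi HX. split.
  - intro b. destruct (choose_fun (fun y z => X z /\ le lt y z)) as [Nf HN]. { intro y. apply HX. }
    destruct (omega_lemma i (fun _ y => Nf y) b Hi) as [s [Hs1 Hs2]]. { intros; apply HN. }
    destruct Hi as [j Hj].
    exists s. split; [|left; auto]. split. exists b; auto.
    intros t Ht. destruct (Hs2 j Hj t Ht) as [y [a c]]. exists (Nf y). split; auto. apply HN.
  - intros a Ha. apply acc_acc; auto.
Qed.

Lemma club_True : club lt (fun _ => True).
Proof. split. intro b. exists b. split; auto. apply le_refl. intros; auto. Qed.


Variable rh : T.
Hypothesis Hrh : infinite_regular lt rh.

Lemma rh_pos : exists j, lt j rh.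
Proof. destruct Hrh as [[f [_ Hf]] _]. exists (f O). auto. Qed.

Lemma cof_exists s : exists g, cof_eq lt s g.
Proof.
  set (P := fun g => exists X, cofinal_in lt X s /\ equinumerous X (seg lt g)).
  assert (Ps : P s). { exists (seg lt s). split.
    - split. intros x h; auto. intros b hb. exists b. split; auto. apply le_refl.
    - exists (fun x => x). split; [|split]; auto. intros y hy. exists y; auto. }
  destruct (wf_min P (ex_intro _ s Ps)) as [g [Pg Hg]].
  exists g. split; auto. intros d hd Hd. exact (Hg d Hd hd).
Qed.

Lemma cof_unique a g1 g2 : cof_eq lt a g1 -> cof_eq lt a g2 -> g1 = g2.
Proof.
  intros [A1 B1] [A2 B2]. destruct (tri g1 g2) as [h|[h|h]]; auto.
  - exfalso; exact (B2 g1 h A1).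
  - exfalso; exact (B1 g2 h A2).
Qed.

Lemma reg_bound (X : T -> Prop) g (f : T -> T) : equinumerous X (seg lt g) -> lt g rh ->
  (forall x, X x -> lt (f x) rh) -> exists b, lt b rh /\ forall x, X x -> le lt (f x) b.
Proof.
  intros [h [H1 [H2 H3]]] Hg Hf. apply NNPP; intro Hn.
  set (W := fun w => exists x, X x /\ f x = w).
  destruct (choose_fun (fun w x => W w -> X x /\ f x = w)) as [xw Hxw].
  { intro w. destruct (classic (W w)) as [[x Hx]|Hw]. exists x; auto. exists w. intro; contradiction. }
  destruct (inj_seg W (fun w => h (xw w)) g) as [e [Heg HWe]].
  - intros w Hw. apply H1. apply Hxw; auto.
  - intros w w' Hw Hw' E. apply H2 in E; try apply Hxw; auto.
    destruct (Hxw w Hw) as [_ a]. destruct (Hxw w' Hw') as [_ b]. rewrite <- a, <- b, E. auto.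
  - destruct Hrh as [_ [_ Creg]]. apply (Creg e). eapply le_lt; eauto.
    exists W. split; auto. split.
    + intros w [x [a b]]. subst. unfold seg. auto.
    + intros b hb. apply NNPP; intro Hb. apply Hn. exists b. split; auto. intros x Hx.
      apply not_lt_le. intro hh. apply Hb. exists (f x). split. exists x; auto. left; auto.
Qed.

Lemma rh_limit v : lt v rh -> exists w, lt v w /\ lt w rh.
Proof.
  intro Hv. apply NNPP; intro Hn.
  destruct Hrh as [[f [finj Hf]] [_ Creg]].
  assert (Hab : exists a b, lt a b /\ lt b rh).
  { destruct (tri (f O) (f (S O))) as [h|[h|h]].
    - exists (f O), (f (S O)); auto.
    - apply finj in h. discriminate.
    - exists (f (S O)), (f O); auto. }
  destruct Hab as [a [b [hab hb]]].
  destruct (inj_seg (fun x => x = v) (fun _ => a) b) as [e [Heb He]].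
  - intros; auto.
  - intros x y hx hy _. subst; auto.
  - apply (Creg e). eapply le_lt; eauto. exists (fun x => x = v). split; auto. split.
    + intros x hx; subst; auto.
    + intros b' hb'. exists v. split; auto. apply not_lt_le. intro h. apply Hn. exists b'; auto.
Qed.

Lemma exists_above b : exists c, lt b c.
Proof. destruct (bound_seg rh (fun _ => b)) as [c Hc]. destruct rh_pos as [j hj]. exists c. apply (Hc j hj). Qed.

Lemma Ege_unbounded (C : T -> Prop) : club lt C -> forall b, exists s, C s /\ E_cf_ge lt rh s /\ le lt b s.
Proof.
  intros [CU CC] b.
  set (Z := fun z => C z /\ lt b z).
  assert (ZU : unbounded lt Z).
  { intro b'. destruct (exists_above b) as [c hc]. destruct (max2 b' c) as [m [m1 m2]].
    destruct (CU m) as [z [z1 z2]]. exists z. split. split; auto. eapply lt_le; eauto. eapply le_trans; eauto.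
    eapply le_trans; eauto. }
  set (ph := phi b Z).
  assert (Hz : exists zs, Z zs /\ ph zs = rh).
  { apply NNPP; intro Hn.
    assert (Hlt : forall z, Z z -> lt (ph z) rh).
    { intros z hz. destruct (tri (ph z) rh) as [h|[h|h]]; auto.
      - exfalso; apply Hn; exists z; auto.
      - destruct (phi_down b Z z rh h) as [z' [_ [a c]]]. exfalso; apply Hn; exists z'; auto. }
    destruct Hkappa as [K1 [K2 _]]. destruct (K2 _ ZU) as [u [uinj uin]].
    apply (K1 rh). exists (fun x => ph (u x)). split.
    - intros x y E. apply uinj. apply (phi_inj b Z); auto.
    - intro x. apply Hlt; auto. }
  destruct Hz as [zs [Zzs Hzs]].
  set (X := fun x => Z x /\ lt x zs).
  assert (Xph : forall x, X x -> lt (ph x) rh).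
  { intros x [a c]. rewrite <- Hzs. apply phi_mono; auto. }
  assert (phX : forall v, lt v rh -> exists x, X x /\ ph x = v).
  { intros v hv. rewrite <- Hzs in hv. destruct (phi_down b Z zs v hv) as [z' [a [c d]]].
    exists z'. split; auto. split; auto. }
  assert (ph_rev : forall x y, X x -> X y -> lt (ph x) (ph y) -> lt x y).
  { intros x y hx hy h. apply not_le_lt. intro hle. destruct hle as [hl|hl].
    - pose proof (phi_mono b Z y x (proj1 hy) (proj1 hx) hl). exact (asym _ _ h H).
    - subst. exact (irr _ h). }
  destruct (lub_ex X zs) as [s [S1 S2]]. { intros x [_ h]; auto. }
  assert (Xlt : forall x, X x -> lt x s).
  { intros x hx. destruct (rh_limit (ph x) (Xph x hx)) as [w [w1 w2]].
    destruct (phX w w2) as [x' [hx' E]]. subst w. eapply lt_le. apply ph_rev; eauto. apply S1; auto. }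
  assert (Xcof : forall t, lt t s -> exists x, X x /\ lt t x).
  { intros t ht. apply NNPP; intro Hn. assert (le lt s t). { apply S2. intros x hx. apply not_lt_le. intro h. apply Hn; eauto. }
    exact (le_not_lt _ _ H ht). }
  destruct rh_pos as [j0 hj0]. destruct (phX j0 hj0) as [x0 [Hx0 _]].
  assert (accX : acc lt X s).
  { split. exists x0; auto. intros t ht. destruct (Xcof t ht) as [x [a c]]. exists x; auto. }
  exists s. split; [|split].
  - apply CC. eapply acc_mono; [|exact accX]. intros x [[a _] _]; auto.
  - split. eapply acc_mono; [|exact accX]. intros x _; exact I.
    destruct (cof_exists s) as [g Hg]. exists g. split; auto. intro hg.
    destruct Hg as [[X' [[X's X'c] HX']] _].
    destruct (choose_fun (fun x' y => lt x' s -> X y /\ lt x' y)) as [cy Hcy].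
    { intro x'. destruct (classic (lt x' s)) as [h|h]. destruct (Xcof x' h) as [y hy]. exists y; auto. exists x'. intro; contradiction. }
    destruct (reg_bound X' g (fun x' => ph (cy x')) HX' hg) as [beta [hb Hb]].
    { intros x' hx'. apply Xph. apply Hcy. apply X's; auto. }
    destruct (rh_limit beta hb) as [w [w1 w2]]. destruct (phX w w2) as [xw [Hxw Ew]].
    destruct (X'c xw (Xlt xw Hxw)) as [x' [hx' hle]].
    destruct (Hcy x' (X's x' hx')) as [Yc Yl].
    assert (lt (cy x') xw). { apply ph_rev; auto. rewrite Ew. eapply le_lt; eauto. }
    apply (irr x'). eapply lt_trans. exact Yl. eapply lt_le; eauto.
  - left. eapply lt_trans. exact (proj2 (proj1 Hx0)). apply Xlt; auto.
Qed.


Lemma max2' a b : exists m, le lt a m /\ le lt b m /\ (m = a \/ m = b).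
Proof. destruct (tri a b) as [h|[h|h]]; [exists b|exists b|exists a]; subst; repeat split; auto using le_refl, lt_lew. Qed.

Definition IsSup (Y : T -> Prop) x s :=
  le lt s x /\ (forall y, Y y -> le lt y x -> le lt y s) /\ (forall t, lt t s -> exists y, Y y /\ lt t y /\ le lt y s).

Lemma sup_ex Y x : exists s, IsSup Y x s.
Proof.
  set (U := fun u => le lt u x /\ forall y, Y y -> le lt y x -> le lt y u).
  assert (Ux : U x). { split. apply le_refl. auto. }
  destruct (wf_min U (ex_intro _ x Ux)) as [s [[Us1 Us2] Smin]].
  exists s. split; [|split]; auto. intros t ht. apply NNPP; intro Hn. apply (Smin t); auto. split.
  - left. eapply lt_le; eauto.
  - intros y Hy Hyx. apply not_lt_le. intro h. apply Hn. exists y. auto.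
Qed.

Lemma sup_unique Y x s1 s2 : IsSup Y x s1 -> IsSup Y x s2 -> s1 = s2.
Proof.
  intros [A1 [B1 C1]] [A2 [B2 C2]]. destruct (tri s1 s2) as [h|[h|h]]; auto; exfalso.
  - destruct (C2 s1 h) as [y [a [b c]]]. pose proof (B1 y a (le_trans _ _ _ c A2)). exact (le_not_lt _ _ H b).
  - destruct (C1 s2 h) as [y [a [b c]]]. pose proof (B2 y a (le_trans _ _ _ c A1)). exact (le_not_lt _ _ H b).
Qed.

Lemma sup_mono Y' Y x s' s : subset Y' Y -> IsSup Y' x s' -> IsSup Y x s -> le lt s' s.
Proof.
  intros HY [A1 [B1 C1]] [A2 [B2 C2]]. apply not_lt_le. intro h.
  destruct (C1 s h) as [y [a [b c]]]. pose proof (B2 y (HY y a) (le_trans _ _ _ c A1)). exact (le_not_lt _ _ H b).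
Qed.

Inductive Gr (L : T -> T -> Prop) (Y : T -> Prop) : T -> T -> Prop :=
| Gb : forall x s, IsSup Y x s -> Y s -> Gr L Y x s
| Gs : forall x s y g, IsSup Y x s -> ~ Y s -> L s y -> Gr L Y y g -> Gr L Y x g.

Section G.
Variable L : T -> T -> Prop.
Hypothesis HL : forall s, cofinal_in lt (L s) s.

Lemma G1 Y x g : Gr L Y x g -> Y g /\ le lt g x.
Proof.
  induction 1 as [x s Hs Ys|x s y g Hs Ys Ly Hg IH].
  - split; auto. apply Hs.
  - destruct IH as [a b]. split; auto. left. eapply le_lt. exact b.
    eapply lt_le. apply (proj1 (HL s)). auto. apply Hs.
Qed.

Lemma G2 Y x s : IsSup Y x s -> forall t, lt t s -> exists g, Gr L Y x g /\ lt t g.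
Proof.
  revert s. induction (wf x) as [x _ IH]. intros s Hs t ht.
  destruct (classic (Y s)) as [Ys|Ys].
  - exists s. split; auto. apply Gb; auto.
  - destruct (proj2 (proj2 Hs) t ht) as [y' [Yy' [ty' y's]]].
    assert (y'lt : lt y' s). { destruct y's as [h|h]; auto. subst; contradiction. }
    destruct (proj2 (HL s) y' y'lt) as [y [Ly hy]].
    destruct (sup_ex Y y) as [sy Hsy].
    assert (ylt : lt y x). { eapply lt_le. apply (proj1 (HL s)); auto. apply Hs. }
    destruct (IH y ylt sy Hsy t) as [g [Gg tg]].
    { eapply lt_le. exact ty'. apply (proj1 (proj2 Hsy)); auto. }
    exists g. split; auto. eapply Gs; eauto.
Qed.

Lemma Gr_inv_base Y x s g : IsSup Y x s -> Y s -> (Gr L Y x g <-> g = s).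
Proof.
  intros Hs Ys. split.
  - intro H. inversion H; subst.
    + eapply sup_unique; eauto.
    + exfalso. rewrite (sup_unique _ _ _ _ Hs H0) in Ys. contradiction.
  - intro; subst. apply Gb; auto.
Qed.

Lemma Gr_inv_step Y x s g : IsSup Y x s -> ~ Y s -> (Gr L Y x g <-> exists y, L s y /\ Gr L Y y g).
Proof.
  intros Hs Ys. split.
  - intro H. inversion H; subst.
    + exfalso. rewrite (sup_unique _ _ _ _ Hs H0) in Ys. contradiction.
    + rewrite (sup_unique _ _ _ _ Hs H0). eauto.
  - intros [y [a b]]. eapply Gs; eauto.
Qed.

Variable Yf : T -> T -> Prop.
Hypothesis Hdec : forall i j, le lt i j -> lt j rh -> subset (Yf j) (Yf i).
Hypothesis Hlim : forall i s, lt i rh -> (exists t, lt t s) ->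
   (forall t, lt t s -> exists y, Yf i y /\ lt t y /\ lt y s) -> ~ Yf i s ->
   exists g, lt g rh /\ equinumerous (L s) (seg lt g).

Lemma G3 x : exists i0, lt i0 rh /\ forall i, le lt i0 i -> lt i rh -> forall g, (Gr L (Yf i) x g <-> Gr L (Yf i0) x g).
Proof.
  induction (wf x) as [x _ IH].
  destruct (choose_fun (fun i s => IsSup (Yf i) x s)) as [si Hsi]. { intro i. apply sup_ex. }
  destruct rh_pos as [j0 hj0].
  destruct (wf_min (fun v => exists i, lt i rh /\ si i = v) (ex_intro _ (si j0) (ex_intro _ j0 (conj hj0 eq_refl))))
    as [m [[i1 [hi1 Ei1]] Mmin]].
  assert (Hst : forall i, le lt i1 i -> lt i rh -> IsSup (Yf i) x m).
  { intros i h1 h2. assert (si i = m).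
    { apply le_antisym. subst m. eapply sup_mono; [ | apply Hsi | apply Hsi]. apply Hdec; auto.
      apply not_lt_le. intro h. apply (Mmin (si i)); eauto. }
    rewrite <- H; auto. }
  destruct (classic (forall i, le lt i1 i -> lt i rh -> Yf i m)) as [CA|CB].
  - exists i1. split; auto. intros i h1 h2 g.
    rewrite (Gr_inv_base _ _ _ g (Hst i h1 h2) (CA i h1 h2)).
    rewrite (Gr_inv_base _ _ _ g (Hst i1 (le_refl _) hi1) (CA i1 (le_refl _) hi1)). tauto.
  - assert (exists i2, le lt i1 i2 /\ lt i2 rh /\ ~ Yf i2 m) as [i2 [h21 [h22 h23]]].
    { apply NNPP; intro Hn. apply CB. intros i a b. apply NNPP; intro c. apply Hn. eauto. }
    assert (NY : forall i, le lt i2 i -> lt i rh -> ~ Yf i m).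
    { intros i a b c. apply h23. eapply Hdec; eauto. }
    assert (Hst2 : forall i, le lt i2 i -> lt i rh -> IsSup (Yf i) x m).
    { intros; apply Hst; auto. eapply le_trans; eauto. }
    assert (Hstep : forall i g, le lt i2 i -> lt i rh -> (Gr L (Yf i) x g <-> exists y, L m y /\ Gr L (Yf i) y g)).
    { intros i g a b. apply Gr_inv_step; auto. }
    destruct (classic (exists t, lt t m)) as [Hm|Hm].
    + destruct (Hlim i2 m h22 Hm) as [gm [hgm Hgm]]; auto.
      { intros t ht. destruct (proj2 (proj2 (Hst2 i2 (le_refl _) h22)) t ht) as [y [a [b c]]].
        exists y. split; auto. split; auto. destruct c as [c|c]; auto. subst; contradiction. }
      assert (Lx : forall y, L m y -> lt y x).
      { intros y hy. eapply lt_le. apply (proj1 (HL m)); auto. apply (Hst2 i2 (le_refl _) h22). }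
      destruct (choose_fun (fun y i => L m y -> lt i rh /\ forall i', le lt i i' -> lt i' rh -> forall g, (Gr L (Yf i') y g <-> Gr L (Yf i) y g)))
        as [iy Hiy].
      { intro y. destruct (classic (L m y)) as [h|h].
        - destruct (IH y (Lx y h)) as [i [a b]]. exists i; auto.
        - exists i2. intro; contradiction. }
      destruct (reg_bound (L m) gm iy Hgm hgm) as [beta [hb Hb]]. { intros y hy. apply Hiy; auto. }
      destruct (max2' i2 beta) as [i0 [a0 [b0 c0]]].
      assert (hi0 : lt i0 rh). { destruct c0; subst; auto. }
      exists i0. split; auto. intros i h1 h2 g.
      rewrite (Hstep i g); [| eapply le_trans; eauto | auto].
      rewrite (Hstep i0 g); auto.
      split; intros [y [Ly Gy]]; exists y; split; auto.
      * destruct (Hiy y Ly) as [_ E].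
        assert (q0 : le lt (iy y) i0). { eapply le_trans. apply Hb; auto. auto. }
        assert (q1 : le lt (iy y) i). { eapply le_trans; eauto. }
        apply (proj2 (E i0 q0 hi0 g)). apply (proj1 (E i q1 h2 g)). auto.
      * destruct (Hiy y Ly) as [_ E].
        assert (q0 : le lt (iy y) i0). { eapply le_trans. apply Hb; auto. auto. }
        assert (q1 : le lt (iy y) i). { eapply le_trans; eauto. }
        apply (proj2 (E i q1 h2 g)). apply (proj1 (E i0 q0 hi0 g)). auto.
    + exists i2. split; auto. intros i h1 h2 g.
      rewrite (Hstep i g h1 h2). rewrite (Hstep i2 g (le_refl _) h22).
      split; intros [y [Ly _]]; exfalso; apply Hm; exists y; apply (proj1 (HL m)); auto.
Qed.

End G.


Section Cs.
Variable Df : (T -> Prop) -> (T -> Prop).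
Definition CsF (i : T) (rec : forall j, lt j i -> T -> Prop) : T -> Prop :=
  fun x => forall j (H : lt j i), Df (rec j H) x.
Definition Cs : T -> T -> Prop := Fix wf (fun _ => T -> Prop) CsF.
Lemma Cs_eq i : Cs i = fun x => forall j, lt j i -> Df (Cs j) x.
Proof.
  unfold Cs at 1. rewrite Fix_eq.
  - unfold CsF. reflexivity.
  - intros x f g Hfg. unfold CsF.
    assert (E : f = g). { apply functional_extensionality_dep; intro y. apply functional_extensionality_dep; intro p. auto. }
    subst; reflexivity.
Qed.
Lemma Cs_in i x : Cs i x <-> forall j, lt j i -> Df (Cs j) x.
Proof. rewrite Cs_eq. tauto. Qed.
End Cs.

Variable th : T.
Hypothesis Hthrh : lt th rh.
Variable K : (T -> Prop) -> Prop.
Hypothesis HK : ideal lt K.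
Hypothesis HKc : kappa_complete lt K.
Hypothesis HNS : NS_restr_sub lt th K.

Lemma not_Ege_of_Eth a : E_cf lt th a -> ~ E_cf_ge lt rh a.
Proof.
  intros [_ H1] [_ [g [H2 H3]]]. rewrite (cof_unique _ _ _ H1 H2) in Hthrh. contradiction.
Qed.

Definition Yc (C : T -> Prop) := fun x => C x /\ E_cf_ge lt rh x.

Definition cand (L : T -> T -> Prop) (C : T -> Prop) : T -> T -> Prop :=
  fun a g => (acc lt (Yc C) a /\ Gr L (Yc C) a g) \/ (~ acc lt (Yc C) a /\ E_cf_ge lt rh g /\ lt g a).

Lemma cand_ok L (HL : forall s, cofinal_in lt (L s) s) C a : E_cf lt th a -> acc lt (E_cf_ge lt rh) a ->
  subset (cand L C a) (fun g => E_cf_ge lt rh g /\ lt g a) /\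
  (forall b, lt b a -> exists g, cand L C a g /\ le lt b g).
Proof.
  intros Ha Hacc. pose proof (not_Ege_of_Eth a Ha) as NE.
  destruct (classic (acc lt (Yc C) a)) as [HY|HY].
  - assert (Hs : IsSup (Yc C) a a).
    { split. apply le_refl. split. auto. intros t ht. destruct (proj2 HY t ht) as [y [a1 [a2 a3]]].
      exists y. split; auto. split; auto. left; auto. }
    split.
    + intros g [[_ G]|[h _]]; [|contradiction].
      destruct (G1 L HL _ _ _ G) as [[_ E] le1]. split; auto.
      destruct le1 as [l|l]; auto. subst. contradiction.
    + intros b hb. destruct (G2 L HL _ _ _ Hs b hb) as [g [a1 a2]]. exists g. split.
      left; auto. left; auto.
  - split.
    + intros g [[h _]|[_ h]]; [contradiction|auto].
    + intros b hb. destruct (proj2 Hacc b hb) as [g [a1 [a2 a3]]]. exists g. split. right; auto. left; auto.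
Qed.

Lemma main_lemma :
  exists c : T -> T -> Prop,
    (forall a, E_cf lt th a -> acc lt (E_cf_ge lt rh) a ->
       subset (c a) (fun g => E_cf_ge lt rh g /\ lt g a) /\
       (forall b, lt b a -> exists g, c a g /\ le lt b g)) /\
    (forall C, club lt C ->
       ~ K (fun a => (E_cf lt th a /\ acc lt (E_cf_ge lt rh) a) /\ subset (c a) C)).
Proof.
  destruct (choose_fun (fun s (p : (T -> Prop) * T) => cofinal_in lt (fst p) s /\ equinumerous (fst p) (seg lt (snd p)) /\ cof_eq lt s (snd p)))
    as [Lp HLp].
  { intro s. destruct (cof_exists s) as [g Hg]. destruct Hg as [[X [a b]] c]. exists (X, g). simpl. split; auto. split; auto. split; eauto. }
  set (L := fun s => fst (Lp s)).
  assert (HL : forall s, cofinal_in lt (L s) s). { intro s. apply HLp. }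
  apply NNPP; intro Hn.
  assert (Hfail : forall C, exists D, club lt D /\ K (fun a => (E_cf lt th a /\ acc lt (E_cf_ge lt rh) a) /\ subset (cand L C a) D)).
  { intro C. apply NNPP; intro HC. apply Hn. exists (cand L C). split.
    - intros a h1 h2. apply cand_ok; auto.
    - intros D HD HKD. apply HC. exists D; auto. }
  destruct (choose_fun _ Hfail) as [Df HDf].
  set (Cs' := Cs Df).
  assert (Cclub : forall i, club lt (Cs' i)).
  { intro i. unfold Cs'. rewrite Cs_eq. apply club_inter. intros j _. apply HDf. }
  assert (Cdec : forall i j, lt j i -> subset (Cs' i) (Cs' j)).
  { intros i j hji x. unfold Cs'. rewrite !Cs_in. intros H j' hj'. apply H. eapply lt_trans; eauto. }
  assert (CD : forall i j, lt j i -> subset (Cs' i) (Df (Cs' j))).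
  { intros i j hji x. unfold Cs'. rewrite Cs_in. intros H. apply H; auto. }
  set (Yf := fun i => Yc (Cs' i)).
  assert (Hdec : forall i j, le lt i j -> lt j rh -> subset (Yf j) (Yf i)).
  { intros i j [h|h] _ x [a b]; [split; auto; eapply Cdec; eauto| subst; split; auto]. }
  assert (Hlim : forall i s, lt i rh -> (exists t, lt t s) ->
     (forall t, lt t s -> exists y, Yf i y /\ lt t y /\ lt y s) -> ~ Yf i s ->
     exists g, lt g rh /\ equinumerous (L s) (seg lt g)).
  { intros i s hi Hs Hlim NY. exists (snd (Lp s)). split; [|apply HLp].
    assert (Cs' i s). { apply (proj2 (Cclub i)). split; auto. intros t ht. destruct (Hlim t ht) as [y [[a _] b]]. exists y; auto. }
    assert (NE : ~ E_cf_ge lt rh s). { intro h. apply NY. split; auto. }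
    apply NNPP; intro hg. apply NE. split.
    - split; auto. intros t ht. destruct (Hlim t ht) as [y [_ b]]. exists y; auto.
    - exists (snd (Lp s)). split; auto. apply HLp. }
  set (Ys := Yc (Cs' rh)).
  assert (YsU : unbounded lt Ys).
  { intro b. destruct (Ege_unbounded (Cs' rh) (Cclub rh) b) as [s [a [c d]]]. exists s. split; auto. split; auto. }
  assert (Aclub : club lt (acc lt Ys)). { apply (acc_club Ys rh rh_pos YsU). }
  set (Aset := fun i a => (E_cf lt th a /\ acc lt (E_cf_ge lt rh) a) /\ subset (cand L (Cs' i) a) (Df (Cs' i))).
  assert (Key : forall a, E_cf lt th a -> acc lt Ys a -> exists i, lt i rh /\ Aset i a).
  { intros a Ha HYa.
    destruct (G3 L HL Yf Hdec Hlim a) as [i0 [hi0 Hi0]].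
    destruct (rh_limit i0 hi0) as [j [hj1 hj2]].
    exists i0. split; auto. split.
    - split; auto. eapply acc_mono; [|exact HYa]. intros x [_ h]; auto.
    - intros g [[_ G]|[NA _]].
      + apply (Hi0 j (lt_lew _ _ hj1) hj2 g) in G. destruct (G1 L HL _ _ _ G) as [[ga _] _].
        eapply CD; eauto.
      + exfalso. apply NA. eapply acc_mono; [|exact HYa]. intros x [xa xb]. split; auto. exact (Cdec rh i0 hi0 x xa). }
  destruct HK as [_ [Ktop [_ [Ksub Kun]]]].
  assert (KU : K (fun x => exists i, lt i rh /\ Aset i x)).
  { apply (HKc rh Aset). intros i _. apply HDf. }
  assert (KB1 : K (fun x => E_cf lt th x /\ ~ acc lt Ys x)).
  { apply HNS. exists (acc lt Ys). split; auto. intros x h [[_ c] _]. contradiction. }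
  assert (KB2 : K (fun x => ~ E_cf lt th x)).
  { apply HNS. exists (fun _ => True). split. apply club_True. intros x _ [a b]. contradiction. }
  apply Ktop. eapply Ksub; [|apply Kun; [apply Kun; [exact KU|exact KB1]|exact KB2]].
  intros x _. destruct (classic (E_cf lt th x)) as [h|h]; [|right; auto].
  destruct (classic (acc lt Ys x)) as [h'|h']; [|left; right; auto].
  left; left. apply Key; auto.
Qed.

End Ord.

Theorem proposition5p3 (T : Type) (lt : T -> T -> Prop)
  (Hwo : strict_well_order lt) (Hkappa : regular_uncountable_kappa lt)
  (th rh : T) (Hth : infinite_regular lt th) (Hrh : infinite_regular lt rh)
  (Hthrh : lt th rh)
  (K : (T -> Prop) -> Prop) (HK : ideal lt K) (HKc : kappa_complete lt K)
  (HNS : NS_restr_sub lt th K) :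
  exists c : T -> T -> Prop,
    (forall a, E_cf lt th a -> acc lt (E_cf_ge lt rh) a ->
       subset (c a) (fun g => E_cf_ge lt rh g /\ lt g a) /\
       (forall b, lt b a -> exists g, c a g /\ le lt b g)) /\
    (forall C, club lt C ->
       ~ K (fun a => (E_cf lt th a /\ acc lt (E_cf_ge lt rh) a) /\ subset (c a) C)).
Proof.
  exact (main_lemma T lt Hwo Hkappa rh Hrh th Hthrh K HK HKc HNS).
Qed.
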